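(* Let $t\ge 1$ and $c\in\mathbb{Z}$. Then \[ \begin{bmatrix}K;c+2\\ t\end{bmatrix}=(q^t+q^{-t})\begin{bmatrix}K;c+1\\ t\end{bmatrix}-\begin{bmatrix}K;c\\ t\end{bmatrix}+\begin{bmatrix}K;c\\ t-2\end{bmatrix}. \]
   Context: Let $q$ be an indeterminate and work in the Laurent polynomial ring $\mathbb{Q}(q)[K,K^{-1}]$ (the Cartan part of $\mathcal{U}_q(\mathfrak{sl}_2)$). Let $\{n\}_q=\frac{q^n-q^{-n}}{q-q^{-1}}$, $\{n\}_q!=\{n\}_q\cdots\{1\}_q$, $[K;a]=\frac{q^aK-q^{-a}K^{-1}}{q-q^{-1}}$ for $a\in\mathbb{Z}$, and for $c\in\mathbb{Z}$, $t\in\mathbb{N}_0$, $\begin{bmatrix}K;c\\ t\end{bmatrix}=\frac{[K;c][K;c-1]\cdots[K;c-t+1]}{\{t\}_q!}$, with $\begin{bmatrix}K;c\\ 0\end{bmatrix}=1$ and $\begin{bmatrix}K;c\\ t\end{bmatrix}=0$ for $t<0$. *)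

(* Defs.v *)
From HB Require Import structures.
From mathcomp Require Import all_boot all_order all_algebra fraction.
Set Implicit Arguments. Unset Strict Implicit. Unset Printing Implicit Defensive.
Import Order.TTheory GRing.Theory Num.Theory.
Local Open Scope ring_scope.

Definition Qq : fieldType := {fraction {poly rat}}.
(* Ambient field Q(q)(K), the fraction field of Q(q)[K]; it contains the
   Laurent polynomial ring Q(q)[K,K^-1] as a subring. *)
Definition LK : fieldType := {fraction {poly Qq}}.

Definition q0 : Qq := FracField.tofrac ('X : {poly rat}).
Definition q : LK := FracField.tofrac (q0%:P : {poly Qq}).
Definition K : LK := FracField.tofrac ('X : {poly Qq}).

Definition qint (n : int) : LK := (q ^ n - q ^ (- n)) / (q - q ^ (-1)).
Definition qfact (t : nat) : LK := \prod_(i < t) qint (i.+1)%:Z.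
Definition Kbr (a : int) : LK := (q ^ a * K - q ^ (- a) * K ^ (-1)) / (q - q ^ (-1)).
(* [K; c \\ t] for t : int; zero for t < 0, 1 for t = 0 *)
Definition Kbin (c t : int) : LK :=
  if (t < 0) then 0
  else (\prod_(i < `|t|%N) Kbr (c - i%:Z)) / qfact `|t|%N.

(* Main.v *)
Require Import Defs.
From HB Require Import structures.
From mathcomp Require Import all_boot all_order all_algebra fraction.
From mathcomp Require Import ring.
Import Order.TTheory GRing.Theory Num.Theory.
Local Open Scope ring_scope.

Lemma q_neq0 : q != 0.
Proof. by rewrite /q tofrac_eq0 polyC_eq0 /q0 tofrac_eq0 polyX_eq0. Qed.

Lemma e1 (x y : {poly Qq}) : @FracField.tofrac {poly Qq} (x - y) = @FracField.tofrac {poly Qq} x - @FracField.tofrac {poly Qq} y :> LK.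
Proof. exact: tofracB. Qed.
Lemma e3 k : @FracField.tofrac {poly Qq} ((q0%:P)^+k) = q^+k.
Proof. exact: tofracXn. Qed.
Lemma e4 k : @FracField.tofrac {poly Qq} ((q0 ^+ k - 1)%:P) = q ^+ k - 1 :> LK.
Proof.
rewrite (polyCB (q0^+k) 1) (polyC_exp k q0) polyC1.
by rewrite e1 e3; congr (_ - _).
Qed.
Lemma f1 (x y : {poly rat}) : @FracField.tofrac {poly rat} (x - y) = @FracField.tofrac {poly rat} x - @FracField.tofrac {poly rat} y :> Qq.
Proof. exact: tofracB. Qed.
Lemma f3 k : @FracField.tofrac {poly rat} ('X ^+ k) = q0^+k.
Proof. exact: tofracXn. Qed.
Lemma f4 k : @FracField.tofrac {poly rat} ('X ^+ k - 1) = q0 ^+ k - 1 :> Qq.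
Proof. by rewrite f1 f3; congr (_ - _). Qed.

Lemma qX_neq1 k : (0 < k)%N -> q ^+ k != 1.
Proof.
move=> k0; rewrite -subr_eq0 -e4 tofrac_eq0 polyC_eq0 -f4 tofrac_eq0 subr_eq0.
apply/eqP => h.
by have := congr1 (fun p : {poly rat} => size p) h => /=; rewrite size_polyXn size_poly1 => -[]; case: k k0 {h}.
Qed.


Section Generic.
Variable F : fieldType.
Variables (q K : F).
Hypothesis q_neq0 : q != 0.
Hypothesis K_neq0 : K != 0.
Hypothesis qX_neq1 : forall k, (0 < k)%N -> q ^+ k != 1.

Definition qint' (n : int) : F := (q ^ n - q ^ (- n)) / (q - q ^ (-1)).
Definition qfact' (t : nat) : F := \prod_(i < t) qint' (i.+1)%:Z.
Definition Kbr' (a : int) : F := (q ^ a * K - q ^ (- a) * K ^ (-1)) / (q - q ^ (-1)).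
Definition Kbin' (c t : int) : F :=
  if (t < 0) then 0
  else (\prod_(i < `|t|%N) Kbr' (c - i%:Z)) / qfact' `|t|%N.

Lemma diff_neq0 m : (0 < m)%N -> q ^ m%:Z - q ^ (- m%:Z) != 0.
Proof.
move=> m0; rewrite -exprnN -exprnP.
have x0 : q ^+ m != 0 by rewrite expf_neq0 // q_neq0.
apply/negP => /eqP /subr0_eq h.
have : q ^+ m * q ^+ m = 1 by rewrite {2}h mulfV.
by rewrite -exprD; apply/eqP; apply: qX_neq1; rewrite addn_gt0 m0.
Qed.

Lemma v_neq0 : q - q ^ (-1) != 0.
Proof. by have := diff_neq0 1 isT; rewrite -exprnN -exprnP !expr1. Qed.

Lemma qq_neq1 : q * q - 1 != 0.
Proof. by rewrite subr_eq0 -expr2 qX_neq1. Qed.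

Lemma qint_neq0 m : qint' (m.+1)%:Z != 0.
Proof. by rewrite /qint' mulf_neq0 ?diff_neq0 // invr_neq0 // v_neq0. Qed.

Lemma qfact_neq0 n : qfact' n != 0.
Proof. by rewrite /qfact'; apply/prodf_neq0 => i _; apply: qint_neq0. Qed.

Definition br (x : F) := (x*K - x^-1*K^-1)/(q - q^-1).
Definition qi (x : F) := (x - x^-1)/(q - q^-1).

Lemma KbrE x : Kbr' x = br (q ^ x).
Proof. by rewrite /Kbr' /br invr_expz exprN1. Qed.

Lemma qintE m : qint' m = qi (q ^ m).
Proof. by rewrite /qint' /qi invr_expz exprN1. Qed.

Lemma prodL c n : \prod_(i < n.+1) Kbr' (c - i%:Z) = Kbr' c * \prod_(i < n) Kbr' (c - 1 - i%:Z).
Proof.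
rewrite big_ord_recl subr0; congr (_ * _); apply: eq_bigr => i _.
by rewrite lift0 -addn1 PoszD opprD addrA addrAC.
Qed.
Lemma prodR c n : \prod_(i < n.+1) Kbr' (c - i%:Z) = (\prod_(i < n) Kbr' (c - i%:Z)) * Kbr' (c - n%:Z).
Proof. by rewrite big_ord_recr. Qed.

Lemma qD x y : q ^ (x + y) = q ^ x * q ^ y.
Proof. exact: expfzDr q_neq0. Qed.

Lemma q1 : q ^ 1 = q.
Proof. by rewrite -exprnP expr1. Qed.

Lemma qS k : q ^ (k.+1)%:Z = q ^ k%:Z * q.
Proof. by rewrite -addn1 PoszD qD. Qed.

Lemma qfactS n : qfact' n.+1 = qfact' n * qint' n.+1%:Z.
Proof. by rewrite /qfact' big_ord_recr. Qed.

Lemma main_gen (t : nat) (c : int) :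
  (1 <= t)%N ->
  Kbin' (c + 2) t%:Z =
    (q ^ t%:Z + q ^ (- t%:Z)) * Kbin' (c + 1) t%:Z - Kbin' c t%:Z + Kbin' c (t%:Z - 2).
Proof.
have qq := qq_neq1.
case: t => // [[|n]] _.
  rewrite /Kbin' /= !big_ord1 !subr0 !KbrE !qD.
  rewrite q1 exprN1.
  have a0 : q ^ c != 0 by rewrite expfz_neq0 // q_neq0.
  have f0 := qfact_neq0 1.
  move: a0 f0; set a := q ^ c; set f := qfact' 1 => a0 f0.
  rewrite /br. field. by rewrite q_neq0 K_neq0 a0 f0 qq.
have -> : (n.+2)%:Z - 2 = n%:Z by rewrite -addn2 PoszD addrK.
rewrite /Kbin' /=.
have e21 : c + 2 - 1 = c + 1 by ring.
have e10 : c + 1 - 1 = c by ring.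
rewrite (prodL (c+2) n.+1) e21 (prodL (c+1) n) e10.
rewrite (prodL (c+1) n.+1) e10 (prodR c n.+1) !(prodR c n) !qfactS.
have S : Kbr' (c+2) * Kbr' (c+1) = (q ^ n.+2%:Z + q ^ (- n.+2%:Z)) * Kbr' (c+1) * Kbr' (c - n%:Z)
   - Kbr' (c - n%:Z) * Kbr' (c - n.+1%:Z) + qint' n.+1%:Z * qint' n.+2%:Z.
  rewrite !KbrE !qintE !qD -!invr_expz !qS !expr0z.
  have a0 : q ^ c != 0 by rewrite expfz_neq0 // q_neq0.
  have b0 : q ^ n != 0 by rewrite expfz_neq0 // q_neq0.
  move: a0 b0; set a := q ^ c; set b := q ^ n => a0 b0.
  rewrite /br /qi. field. by rewrite q_neq0 K_neq0 a0 b0 qq.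
rewrite [Kbr' (c+2) * _]mulrA S.
have f0 := qfact_neq0 n.
have i1 := qint_neq0 n.
have i2 := qint_neq0 n.+1.
field. by rewrite f0 i1 i2.
Qed.
End Generic.

Local Opaque LK Qq.

Lemma K_neq0 : K != 0.
Proof. Local Transparent LK Qq. by rewrite /K tofrac_eq0 polyX_eq0. Qed.

Theorem proposition6p1 (t : nat) (c : int) :
  (1 <= t)%N ->
  Kbin (c + 2) t%:Z =
    (q ^ t%:Z + q ^ (- t%:Z)) * Kbin (c + 1) t%:Z - Kbin c t%:Z + Kbin c (t%:Z - 2).
Proof. move=> H. exact (@main_gen LK q K q_neq0 K_neq0 qX_neq1 t c H). Qed.
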